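(* Let $\mathcal C$ be a semi-abelian category, $(C_1,C_0,d,c,e)$ a reflexive graph, $k\colon X\to C_1$ a kernel of $d$, and $C_1\times_{C_0}X$ the pullback of $d$ along $c\circ k$ with projections $\pi_0\colon C_1\times_{C_0}X\to C_1$, $\pi_1\colon C_1\times_{C_0}X\to X$. Then \[0\to X\xrightarrow{(k,0)} C_1\times_{C_0}X \xrightarrow{\pi_1} X\to 0\] is a split short exact sequence with section $(e\circ c\circ k,1_X)$; and if $\xi\colon X\flat X\to X$ denotes the internal action corresponding to it, then the reflexive graph is star-multiplicative if and only if $[1_X,1_X]_\xi=0$.
   Context: A reflexive graph $(C_1,C_0,d,c,e)$ consists of $d,c\colon C_1\to C_0$, $e\colon C_0\to C_1$ with $d\circ e=c\circ e=1_{C_0}$. With $k$, $C_1\times_{C_0}X$ as in the claim, the graph is star-multiplicative if there is a morphism $\zeta\colon C_1\times_{C_0}X\to X$ with $\zeta\circ(k,0)=1_X$ and $\zeta\circ(e\circ c\circ k,1_X)=1_X$ (the pairs denoting morphisms into the pullback). In a semi-abelian category, internal actions $\xi\colon B\flat X\to X$ (where $B\flat X$ is the kernel of $\langle1_B,0\rangle\colon B+X\to B$) correspond, via the semi-direct product construction, to split short exact sequences $0\to X\xrightarrow{k}X\rtimes_\xi B\rightleftarrows B\to0$ with section $s$. For such an action, the $\xi$-commutator $[f,g]_\xi$ of $f\colon X\to Y$, $g\colon B\to Y$ is defined as follows: let $\kappa\colon X\diamond_\xi B\to X+B$ be the kernel of $\langle k,s\rangle\colon X+B\to X\rtimes_\xi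 B$; then $[f,g]_\xi\le Y$ is the regular image of $\langle f,g\rangle\circ\kappa$. *)

(* Defs.v *)
From Stdlib Require Import Setoid.

Set Implicit Arguments.
Unset Strict Implicit.

Record Category := {
  Ob :> Type;
  Hom : Ob -> Ob -> Type;
  idm : forall A, Hom A A;
  comp : forall A B D, Hom B D -> Hom A B -> Hom A D;
  comp_assoc : forall A B D E (h : Hom D E) (g : Hom B D) (f : Hom A B),
      comp h (comp g f) = comp (comp h g) f;
  comp_id_l : forall A B (f : Hom A B), comp (idm B) f = f;
  comp_id_r : forall A B (f : Hom A B), comp f (idm A) = f
}.

Arguments Hom : clear implicits.
Arguments idm {C} A : rename.
Arguments comp {C A B D} _ _ : rename.
Notation "g \o f" := (comp g f) (at level 40, left associativity).

Section Defs.
Variable C : Category.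

Definition is_mono {A B : C} (f : Hom C A B) : Prop :=
  forall (T : C) (g h : Hom C T A), f \o g = f \o h -> g = h.

Definition is_iso {A B : C} (f : Hom C A B) : Prop :=
  exists g : Hom C B A, g \o f = idm A /\ f \o g = idm B.

Definition is_initial (Z : C) : Prop :=
  forall B : C, exists f : Hom C Z B, forall g : Hom C Z B, g = f.
Definition is_terminal (Z : C) : Prop :=
  forall A : C, exists f : Hom C A Z, forall g : Hom C A Z, g = f.
Definition is_zero_object (Z : C) : Prop := is_initial Z /\ is_terminal Z.

Definition is_zero_mor {A B : C} (f : Hom C A B) : Prop :=
  exists (Z : C) (g : Hom C A Z) (h : Hom C Z B), is_zero_object Z /\ f = h \o g.

Definition is_pullback {A B D P : C} (f : Hom C A D) (g : Hom C B D)
    (p1 : Hom C P A) (p2 : Hom C P B) : Prop :=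
  f \o p1 = g \o p2 /\
  forall (T : C) (x : Hom C T A) (y : Hom C T B), f \o x = g \o y ->
    exists u : Hom C T P, p1 \o u = x /\ p2 \o u = y /\
      forall v : Hom C T P, p1 \o v = x -> p2 \o v = y -> v = u.

Definition is_kernel {K A B : C} (k : Hom C K A) (f : Hom C A B) : Prop :=
  is_zero_mor (f \o k) /\
  forall (T : C) (x : Hom C T A), is_zero_mor (f \o x) ->
    exists u : Hom C T K, k \o u = x /\ forall v : Hom C T K, k \o v = x -> v = u.

Definition is_cokernel {A B Q : C} (q : Hom C B Q) (f : Hom C A B) : Prop :=
  is_zero_mor (q \o f) /\
  forall (T : C) (x : Hom C B T), is_zero_mor (x \o f) ->
    exists u : Hom C Q T, u \o q = x /\ forall v : Hom C Q T, v \o q = x -> v = u.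

Definition is_coequalizer {R A Q : C} (q : Hom C A Q) (f g : Hom C R A) : Prop :=
  q \o f = q \o g /\
  forall (T : C) (x : Hom C A T), x \o f = x \o g ->
    exists u : Hom C Q T, u \o q = x /\ forall v : Hom C Q T, v \o q = x -> v = u.

Definition is_regular_epi {A Q : C} (q : Hom C A Q) : Prop :=
  exists (R : C) (f g : Hom C R A), is_coequalizer q f g.

Definition is_coproduct {X Y S : C} (i1 : Hom C X S) (i2 : Hom C Y S) : Prop :=
  forall (T : C) (x : Hom C X T) (y : Hom C Y T),
    exists u : Hom C S T, u \o i1 = x /\ u \o i2 = y /\
      forall v : Hom C S T, v \o i1 = x -> v \o i2 = y -> v = u.

(* internal equivalence relation (r1, r2) : R -> X x X, via generalized elements *)
Definition rel_of {R X : C} (r1 r2 : Hom C R X) (T : C) (a b : Hom C T X) : Prop :=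
  exists t : Hom C T R, r1 \o t = a /\ r2 \o t = b.

Definition is_equivalence_relation {R X : C} (r1 r2 : Hom C R X) : Prop :=
  (forall (T : C) (g h : Hom C T R), r1 \o g = r1 \o h -> r2 \o g = r2 \o h -> g = h) /\
  (forall T (a : Hom C T X), rel_of r1 r2 a a) /\
  (forall T (a b : Hom C T X), rel_of r1 r2 a b -> rel_of r1 r2 b a) /\
  (forall T (a b c : Hom C T X), rel_of r1 r2 a b -> rel_of r1 r2 b c -> rel_of r1 r2 a c).

Definition is_kernel_pair {R X Y : C} (r1 r2 : Hom C R X) (f : Hom C X Y) : Prop :=
  is_pullback f f r1 r2.

(* Semi-abelian (Janelidze–Márki–Tholen): pointed, Barr-exact,
   Bourn-protomodular, with finite limits and binary coproducts. *)
Definition is_semi_abelian : Prop :=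
  (exists Z : C, is_zero_object Z) /\
  (* finite limits: terminal object (the zero object) + pullbacks *)
  (forall (A B D : C) (f : Hom C A D) (g : Hom C B D),
      exists (P : C) (p1 : Hom C P A) (p2 : Hom C P B), is_pullback f g p1 p2) /\
  (forall X Y : C, exists (S : C) (i1 : Hom C X S) (i2 : Hom C Y S), is_coproduct i1 i2) /\
  (forall (A B : C) (f : Hom C A B),
      exists (I : C) (q : Hom C A I) (m : Hom C I B),
        f = m \o q /\ is_regular_epi q /\ is_mono m) /\
  (forall (A B D P : C) (f : Hom C A D) (g : Hom C B D) (p1 : Hom C P A) (p2 : Hom C P B),
      is_pullback f g p1 p2 -> is_regular_epi g -> is_regular_epi p1) /\
  (forall (R X : C) (r1 r2 : Hom C R X), is_equivalence_relation r1 r2 ->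
      exists (Y : C) (f : Hom C X Y), is_kernel_pair r1 r2 f) /\
  (* protomodular (pointed form): the split short five lemma *)
  (forall (K A B K' A' B' : C) (k : Hom C K A) (p : Hom C A B) (s : Hom C B A)
          (k' : Hom C K' A') (p' : Hom C A' B') (s' : Hom C B' A')
          (w : Hom C K K') (u : Hom C A A') (v : Hom C B B'),
      is_kernel k p -> p \o s = idm B ->
      is_kernel k' p' -> p' \o s' = idm B' ->
      u \o k = k' \o w -> p' \o u = v \o p -> u \o s = s' \o v ->
      is_iso w -> is_iso v -> is_iso u).

Definition is_split_short_exact {X A B : C} (k : Hom C X A) (p : Hom C A B)
    (s : Hom C B A) : Prop :=
  is_kernel k p /\ is_cokernel p k /\ p \o s = idm B.

Definition regular_image_is_zero {A B : C} (f : Hom C A B) : Prop :=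
  forall (I : C) (q : Hom C A I) (m : Hom C I B),
    f = m \o q -> is_regular_epi q -> is_mono m -> is_zero_object I.

(* [f, g]_xi = 0 for the action xi corresponding to the split extension
   (k, p, s) : 0 -> X -> A -> B -> 0, computed on the split extension itself
   (which is X ⋊_xi B up to the canonical isomorphism, compatibly with k, s). *)
Definition commutator_trivial {X A B Y : C} (k : Hom C X A) (s : Hom C B A)
    (f : Hom C X Y) (g : Hom C B Y) : Prop :=
  forall (S : C) (j1 : Hom C X S) (j2 : Hom C B S), is_coproduct j1 j2 ->
  forall (ks : Hom C S A), ks \o j1 = k -> ks \o j2 = s ->
  forall (fg : Hom C S Y), fg \o j1 = f -> fg \o j2 = g ->
  forall (D : C) (kappa : Hom C D S), is_kernel kappa ks ->
    regular_image_is_zero (fg \o kappa).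

End Defs.

(* Main.v *)
Require Import Defs.
Set Implicit Arguments.

Ltac ra := repeat rewrite <- comp_assoc.
Ltac raH H := repeat rewrite <- comp_assoc in H.

Lemma zo_out (C : Category) (Z : C) : is_zero_object Z ->
  forall B (f g : Hom C Z B), f = g.
Proof. intros [Hi _] B f g. destruct (Hi B) as [u Hu]. rewrite (Hu f), (Hu g). reflexivity. Qed.

Lemma zo_in (C : Category) (Z : C) : is_zero_object Z ->
  forall A (f g : Hom C A Z), f = g.
Proof. intros [_ Ht] A f g. destruct (Ht A) as [u Hu]. rewrite (Hu f), (Hu g). reflexivity. Qed.

Lemma zero_unique (C : Category) (A B : C) (f g : Hom C A B) :
  is_zero_mor f -> is_zero_mor g -> f = g.
Proof.
  intros [Z [g0 [h [HZ ->]]]] [Z' [g0' [h' [HZ' ->]]]].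
  destruct (proj1 HZ Z') as [j _]. destruct (proj1 HZ' Z) as [i _].
  assert (E : i \o j = idm Z) by apply (zo_out HZ).
  rewrite <- (comp_id_l g0), <- E. ra.
  rewrite (zo_in HZ' _ (j \o g0) g0'). rewrite comp_assoc.
  rewrite (zo_out HZ' _ (h \o i) h'). reflexivity.
Qed.

Lemma zero_comp_l (C : Category) (A B D : C) (f : Hom C A B) (g : Hom C B D) :
  is_zero_mor f -> is_zero_mor (g \o f).
Proof. intros [Z [g0 [h [HZ ->]]]]. exists Z, g0, (g \o h). split; [exact HZ|]. apply comp_assoc. Qed.

Lemma zero_comp_r (C : Category) (A B D : C) (f : Hom C B D) (g : Hom C A B) :
  is_zero_mor f -> is_zero_mor (f \o g).
Proof. intros [Z [g0 [h [HZ ->]]]]. exists Z, (g0 \o g), h. split; [exact HZ|]. symmetry; apply comp_assoc. Qed.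

Lemma zero_exists (C : Category) (HZ : exists Z : C, is_zero_object Z) (A B : C) :
  exists f : Hom C A B, is_zero_mor f.
Proof.
  destruct HZ as [Z HZ]. destruct (proj2 HZ A) as [g _]. destruct (proj1 HZ B) as [h _].
  exists (h \o g). exists Z, g, h. auto.
Qed.

Lemma kernel_mono (C : Category) (K A B : C) (k : Hom C K A) (f : Hom C A B) :
  is_kernel k f -> is_mono k.
Proof.
  intros [Hz Hu] T g h E.
  assert (Z1 : is_zero_mor (f \o (k \o g))) by (rewrite comp_assoc; apply zero_comp_r; exact Hz).
  destruct (Hu T _ Z1) as [u [_ Hun]].
  rewrite (Hun g eq_refl), (Hun h (eq_sym E)). reflexivity.
Qed.

Lemma regimage_zero (C : Category) (A B : C) (f : Hom C A B) :
  is_zero_mor f -> regular_image_is_zero f.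
Proof.
  intros Hf I q m Ef [R [f1 [f2 [Hc Hcu]]]] Hm.
  destruct Hf as [Z [g0 [h0 [HZ Ef2]]]].
  destruct (proj2 HZ I) as [t _].
  assert (Em : m = h0 \o t).
  { assert (Hx : (m \o q) \o f1 = (m \o q) \o f2) by (ra; rewrite Hc; reflexivity).
    destruct (Hcu _ _ Hx) as [u [_ Hun]].
    rewrite (Hun m eq_refl). symmetry. apply Hun. ra. rewrite (zo_in HZ _ (t \o q) g0).
    rewrite <- Ef2. exact Ef. }
  assert (Hall : forall T (g h : Hom C T I), g = h).
  { intros T g h. apply Hm. rewrite Em. ra. rewrite (zo_in HZ _ (t \o g) (t \o h)). reflexivity. }
  split.
  - intros B'. destruct (proj1 HZ B') as [z _]. exists (z \o t). intros g.
    destruct (proj1 HZ I) as [s _].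
    rewrite <- (comp_id_r g). rewrite (Hall _ (idm I) (s \o t)). rewrite comp_assoc.
    rewrite (zo_out HZ _ (g \o s) z). reflexivity.
  - intros T. destruct (proj2 HZ T) as [z _]. destruct (proj1 HZ I) as [s _].
    exists (s \o z). intros; apply Hall.
Qed.

Lemma mono_iso (C : Category) (HC : is_semi_abelian C) (K A B E : C)
  (k : Hom C K A) (p : Hom C A B) (s : Hom C B A) (m : Hom C E A)
  (k' : Hom C K E) (s' : Hom C B E) :
  is_kernel k p -> p \o s = idm B -> is_mono m -> m \o k' = k -> m \o s' = s -> is_iso m.
Proof.
  intros Hk Hps Hm Hk' Hs'.
  destruct HC as [_ [_ [_ [_ [_ [_ H5]]]]]].
  apply (H5 K E B K A B k' (p \o m) s' k p s (idm K) m (idm B)); auto.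
  - split.
    + ra. rewrite Hk'. exact (proj1 Hk).
    + intros T x Hx. raH Hx. destruct (proj2 Hk T _ Hx) as [u [Hu Hun]].
      exists u. split.
      * apply Hm. rewrite comp_assoc, Hk'. exact Hu.
      * intros v Hv. apply Hun. rewrite <- Hk'. ra. rewrite Hv. reflexivity.
  - ra. rewrite Hs'. exact Hps.
  - rewrite comp_id_r. exact Hk'.
  - rewrite comp_id_l. reflexivity.
  - rewrite comp_id_r. exact Hs'.
  - exists (idm K). split; apply comp_id_l.
  - exists (idm B). split; apply comp_id_l.
Qed.

Lemma equalizer_ex (C : Category) (HC : is_semi_abelian C) (A T : C) (x y : Hom C A T) :
  exists (E : C) (m : Hom C E A), is_mono m /\ x \o m = y \o m /\
    forall W (z : Hom C W A), x \o z = y \o z -> exists u, m \o u = z.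
Proof.
  destruct HC as [[Z HZ] [Hpb _]].
  destruct (proj2 HZ T) as [tT _].
  destruct (Hpb _ _ _ tT tT) as [Pr [pr1 [pr2 [Hpe Hpu]]]].
  assert (Pair : forall W (a b : Hom C W T), exists u : Hom C W Pr, pr1 \o u = a /\ pr2 \o u = b /\
      forall v, pr1 \o v = a -> pr2 \o v = b -> v = u).
  { intros W a b. apply Hpu. apply (zo_in HZ). }
  assert (PairU : forall W (v w : Hom C W Pr), pr1 \o v = pr1 \o w -> pr2 \o v = pr2 \o w -> v = w).
  { intros W v w H1 H2. destruct (Pair W (pr1 \o w) (pr2 \o w)) as [u [_ [_ Hu]]].
    rewrite (Hu v H1 H2), (Hu w eq_refl eq_refl). reflexivity. }
  destruct (Pair A x y) as [xy [Hxy1 [Hxy2 _]]].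
  destruct (Pair T (idm T) (idm T)) as [dl [Hd1 [Hd2 _]]].
  destruct (Hpb _ _ _ xy dl) as [E [m [n [He Heu]]]].
  assert (Hxm : x \o m = n).
  { rewrite <- Hxy1. ra. rewrite He. rewrite comp_assoc, Hd1. apply comp_id_l. }
  assert (Hym : y \o m = n).
  { rewrite <- Hxy2. ra. rewrite He. rewrite comp_assoc, Hd2. apply comp_id_l. }
  exists E, m. split; [|split].
  - intros W g h Hg.
    assert (Hn : n \o g = n \o h) by (rewrite <- Hxm; ra; rewrite Hg; reflexivity).
    destruct (Heu W (m \o h) (n \o h)) as [u [_ [_ Hu]]].
    { rewrite comp_assoc, He. ra. reflexivity. }
    rewrite (Hu g Hg Hn), (Hu h eq_refl eq_refl). reflexivity.
  - rewrite Hxm, Hym. reflexivity.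
  - intros W z Hz.
    destruct (Heu W z (x \o z)) as [u [Hu _]].
    { apply PairU.
      - ra. rewrite comp_assoc, Hxy1, comp_assoc, Hd1, comp_id_l. reflexivity.
      - ra. rewrite comp_assoc, Hxy2, comp_assoc, Hd2, comp_id_l. symmetry; exact Hz. }
    exists u. exact Hu.
Qed.

Lemma joint_epic (C : Category) (HC : is_semi_abelian C) (K A B T : C)
  (k : Hom C K A) (p : Hom C A B) (s : Hom C B A) (x y : Hom C A T) :
  is_kernel k p -> p \o s = idm B -> x \o k = y \o k -> x \o s = y \o s -> x = y.
Proof.
  intros Hk Hps H1 H2.
  destruct (@equalizer_ex C HC A T x y) as [E [m [Hm [Hxy Hu]]]].
  destruct (Hu _ k H1) as [k' Hk']. destruct (Hu _ s H2) as [s' Hs'].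
  destruct (@mono_iso C HC _ _ _ _ _ _ _ _ _ _ Hk Hps Hm Hk' Hs') as [g [_ Hg]].
  rewrite <- (comp_id_r x), <- (comp_id_r y), <- Hg, !comp_assoc, Hxy. reflexivity.
Qed.

Lemma kernel_ex (C : Category) (HC : is_semi_abelian C) (A B : C) (f : Hom C A B) :
  exists (K : C) (k : Hom C K A), is_kernel k f.
Proof.
  destruct HC as [[Z HZ] [Hpb _]].
  destruct (proj1 HZ B) as [z0 _].
  destruct (Hpb _ _ _ f z0) as [D [p1 [p2 [He Heu]]]].
  exists D, p1. split.
  - rewrite He. exists Z, p2, z0. auto.
  - intros T x Hx. destruct (proj2 HZ T) as [t _].
    assert (E : f \o x = z0 \o t) by (apply zero_unique; [exact Hx| exists Z, t, z0; auto]).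
    destruct (Heu T x t E) as [u [Hu1 [_ Hu]]].
    exists u. split; [exact Hu1|]. intros v Hv. apply Hu; [exact Hv| apply (zo_in HZ)].
Qed.

Theorem mainTheorem8 (C : Category) (HC : is_semi_abelian C)
  (C1 C0 : C) (d c : Hom C C1 C0) (e : Hom C C0 C1)
  (Hde : d \o e = idm C0) (Hce : c \o e = idm C0)
  (X : C) (k : Hom C X C1) (Hk : is_kernel k d)
  (P : C) (pi0 : Hom C P C1) (pi1 : Hom C P X)
  (HP : is_pullback d (c \o k) pi0 pi1)
  (k0 : Hom C X P) (Hk0a : pi0 \o k0 = k) (Hk0b : is_zero_mor (pi1 \o k0))
  (sec : Hom C X P) (Hsa : pi0 \o sec = e \o c \o k) (Hsb : pi1 \o sec = idm X) :
  is_split_short_exact k0 pi1 sec /\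
  ((exists zeta : Hom C P X, zeta \o k0 = idm X /\ zeta \o sec = idm X) <->
   commutator_trivial k0 sec (idm X) (idm X)).
Proof.
  assert (Hker : is_kernel k0 pi1).
  { split; [exact Hk0b|]. intros T x Hx.
    destruct HP as [HPe HPu].
    assert (Hd : is_zero_mor (d \o (pi0 \o x))).
    { rewrite comp_assoc, HPe. rewrite <- comp_assoc. apply zero_comp_l. exact Hx. }
    destruct (proj2 Hk T _ Hd) as [u [Hu Hun]].
    exists u. split.
    - assert (Hc : d \o (pi0 \o x) = (c \o k) \o (pi1 \o x)) by (rewrite !comp_assoc, HPe; reflexivity).
      destruct (HPu T _ _ Hc) as [w [_ [_ Hw]]].
      rewrite (Hw x eq_refl eq_refl). apply Hw.
      + rewrite comp_assoc, Hk0a. exact Hu.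
      + apply zero_unique; [|exact Hx]. rewrite comp_assoc. apply zero_comp_r. exact Hk0b.
    - intros v Hv. apply Hun. rewrite <- Hk0a, <- Hv. symmetry; apply comp_assoc. }
  split.
  - split; [exact Hker|]. split; [|exact Hsb].
    split; [exact Hk0b|]. intros T x Hx.
    exists (x \o sec). split.
    + symmetry. apply (@joint_epic C HC _ _ _ _ k0 pi1 sec); auto.
      * apply zero_unique; [exact Hx|]. ra. apply zero_comp_l, zero_comp_l. exact Hk0b.
      * ra. rewrite Hsb, comp_id_r. reflexivity.
    + intros v Hv. rewrite <- Hv. ra. rewrite Hsb, comp_id_r. reflexivity.
  - split.
    + intros [zeta [Hz1 Hz2]] S j1 j2 Hcop ks Hks1 Hks2 fg Hfg1 Hfg2 D kappa Hkap.
      destruct (Hcop X (idm X) (idm X)) as [u [_ [_ Hu]]].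
      assert (E : fg = zeta \o ks).
      { rewrite (Hu fg Hfg1 Hfg2). symmetry. apply Hu; ra; [rewrite Hks1|rewrite Hks2]; assumption. }
      apply regimage_zero. rewrite E. ra. apply zero_comp_l. exact (proj1 Hkap).
    + intros Hcomm.
      pose proof HC as HC'.
      destruct HC' as [HZ [Hpb [Hcp [Hfac _]]]].
      destruct (Hcp X X) as [S [j1 [j2 Hcop]]].
      destruct (Hcop P k0 sec) as [ks [Hks1 [Hks2 _]]].
      destruct (Hcop X (idm X) (idm X)) as [fg [Hfg1 [Hfg2 _]]].
      destruct (@kernel_ex C HC _ _ ks) as [D [kappa Hkap]].
      pose proof (Hcomm S j1 j2 Hcop ks Hks1 Hks2 fg Hfg1 Hfg2 D kappa Hkap) as Hri.
      assert (Hfk : is_zero_mor (fg \o kappa)).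
      { destruct (Hfac _ _ (fg \o kappa)) as [I2 [q2 [m2 [E2 [Hq2 Hm2]]]]].
        pose proof (Hri I2 q2 m2 E2 Hq2 Hm2) as HI2. rewrite E2. exists I2, q2, m2. auto. }
      destruct (Hfac _ _ ks) as [I [q [m [Eks [[R0 [f1 [f2 [Hc Hcu]]]] Hm]]]]].
      assert (Hiso : is_iso m).
      { apply (@mono_iso C HC _ _ _ _ k0 pi1 sec m (q \o j1) (q \o j2)); auto.
        - rewrite comp_assoc, <- Eks. exact Hks1.
        - rewrite comp_assoc, <- Eks. exact Hks2. }
      destruct Hiso as [minv [Hmi1 Hmi2]].
      assert (Hq : minv \o ks = q) by (rewrite Eks, comp_assoc, Hmi1; apply comp_id_l).
      destruct (Hpb _ _ _ q q) as [Rq [r1 [r2 [Hre Hru]]]].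
      destruct (Hru S (idm S) (idm S) eq_refl) as [dl [Hd1 [Hd2 _]]].
      destruct (@zero_exists C HZ D S) as [zKS HzKS].
      assert (Hqk : is_zero_mor (q \o kappa)).
      { rewrite <- Hq. ra. apply zero_comp_l. exact (proj1 Hkap). }
      assert (Hqq : q \o zKS = q \o kappa) by (apply zero_unique; [apply zero_comp_l; exact HzKS| exact Hqk]).
      destruct (Hru D zKS kappa Hqq) as [kk [Hkk1 [Hkk2 _]]].
      assert (Hkk : is_kernel kk r1).
      { split; [rewrite Hkk1; exact HzKS|]. intros T z Hz.
        assert (Hz2 : is_zero_mor (ks \o (r2 \o z))).
        { rewrite Eks. ra. rewrite (comp_assoc q r2 z), <- Hre. rewrite <- comp_assoc. apply zero_comp_l, zero_comp_l. exact Hz. }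
        destruct (proj2 Hkap T _ Hz2) as [u [Hu Hun]].
        exists u. split.
        - assert (Hc2 : q \o (r1 \o z) = q \o (r2 \o z)) by (rewrite !comp_assoc, Hre; reflexivity).
          destruct (Hru T _ _ Hc2) as [w [_ [_ Hw]]].
          rewrite (Hw z eq_refl eq_refl). apply Hw.
          + rewrite comp_assoc, Hkk1. apply zero_unique; [apply zero_comp_r; exact HzKS| exact Hz].
          + rewrite comp_assoc, Hkk2. exact Hu.
        - intros v Hv. apply Hun. rewrite <- Hkk2, <- Hv. symmetry; apply comp_assoc. }
      assert (Hfr : fg \o r1 = fg \o r2).
      { apply (@joint_epic C HC _ _ _ _ kk r1 dl); auto.
        - ra. rewrite Hkk1, Hkk2. apply zero_unique; [apply zero_comp_l; exact HzKS| exact Hfk].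
        - ra. rewrite Hd1, Hd2. reflexivity. }
      assert (Hf12 : fg \o f1 = fg \o f2).
      { destruct (Hru R0 f1 f2 Hc) as [t [Ht1 [Ht2 _]]].
        rewrite <- Ht1, <- Ht2, !comp_assoc, Hfr. reflexivity. }
      destruct (Hcu X fg Hf12) as [u0 [Hu0 _]].
      assert (Hz : (u0 \o minv) \o ks = fg) by (ra; rewrite Hq; exact Hu0).
      exists (u0 \o minv). split.
      * rewrite <- Hks1, comp_assoc, Hz. exact Hfg1.
      * rewrite <- Hks2, comp_assoc, Hz. exact Hfg2.
Qed.
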